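(* Let $n\ge1$, let $H,K\le S_n$, and let $\phi:H\to\mathbb C$, $\psi:K\to\mathbb C$ be arbitrary functions. The following are equivalent: (1) $d_\phi^H(A)=d_\psi^K(A)$ for every $A\in\mathbb S_n(\mathbb C)$; (2) $d_\phi^H(S_\sigma)=d_\psi^K(S_\sigma)$ for every $\sigma\in S_n$; (3) $\sum_{\tau\in[\sigma]}\hat\phi(\tau)=\sum_{\tau\in[\sigma]}\hat\psi(\tau)$ for every $\sigma\in S_n$.
   Context: $S_n$ is the symmetric group on $[n]$; $\mathbb S_n(\mathbb C)$ is the set of complex symmetric $n\times n$ matrices. For $G\le S_n$ and $\chi:G\to\mathbb C$, $\hat\chi:S_n\to\mathbb C$ is the extension of $\chi$ by $0$ outside $G$, and $d_\chi^G(A)=\sum_{\sigma\in S_n}\hat\chi(\sigma)\prod_{i=1}^n A_{i\,\sigma(i)}$ for $A\in M_n(\mathbb C)$. For $\sigma\in S_n$, $S_\sigma$ is the $n\times n$ $0/1$ matrix with $(S_\sigma)_{ij}=1$ iff $\sigma(i)=j$ or $\sigma^{-1}(i)=j$. If $\sigma=\sigma_1\cdots\sigma_k$ is the decomposition of $\sigma$ into pairwise disjoint cycles of length at least $2$, then $[\sigma]=\{\sigma_1^{n_1}\cdots\sigma_k^{n_k}:n_j\in\{1,-1\}\}$ (a set; $[\mathrm{id}]=\{\mathrm{id}\}$). *)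

(* Defs.v *)
From HB Require Import structures.
From mathcomp Require Import all_boot all_order all_fingroup all_algebra.
Set Implicit Arguments. Unset Strict Implicit. Unset Printing Implicit Defensive.
Import Order.TTheory GRing.Theory Num.Theory.
Local Open Scope ring_scope.

Definition ext0 (C : nzRingType) n (G : {group 'S_n}) (chi : 'S_n -> C)
  (s : 'S_n) : C := if s \in G then chi s else 0.

Definition gimm (C : comNzRingType) n (G : {group 'S_n}) (chi : 'S_n -> C)
  (A : 'M[C]_n) : C :=
  \sum_(s : 'S_n) ext0 G chi s * \prod_(i < n) A i (s i).

Definition Smat (C : nzRingType) n (s : 'S_n) : 'M[C]_n :=
  \matrix_(i, j) (((s i == j) || ((s^-1)%g i == j)) : nat)%:R.

(* The cycles of s of length >= 2 are restr_perm O s for the orbits O of s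
   with #|O| >= 2.  [s] = { prod_O c_O^{+-1} }. *)
Definition cycle_class n (s : 'S_n) : {set 'S_n} :=
  [set (\prod_(O in porbits s | (1 < #|O|)%N)
          (if e O then restr_perm O s else (restr_perm O s)^-1))%g
   | e : {ffun {set 'I_n} -> bool}].

Definition is_symmetric (C : nzRingType) n (A : 'M[C]_n) : Prop := A^T = A.

(* Main.v *)
Require Import Defs.
From HB Require Import structures.
From mathcomp Require Import all_boot all_order all_fingroup all_algebra.
Import Order.TTheory GRing.Theory Num.Theory.
Set Implicit Arguments. Unset Strict Implicit. Unset Printing Implicit Defensive.

Section Comb.
Variable T : finType.
Implicit Types (s t r : {perm T}) (x y : T).

Definition Tset s : {set {perm T}} :=
  [set t : {perm T} | [forall i, (t i == s i) || (t i == (s^-1)%g i)]].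
Definition Eset s : {set {perm T}} := [set t in Tset s | s \in Tset t].

Lemma TsetP t s : reflect (forall i, (t i == s i) || (t i == (s^-1)%g i)) (t \in Tset s).
Proof. by rewrite inE; apply: (iffP forallP). Qed.

Lemma Tset_refl s : s \in Tset s.
Proof. by apply/TsetP => i; rewrite eqxx. Qed.

Lemma Tset_trans r t s : r \in Tset t -> t \in Tset s -> r \in Tset s.
Proof.
move=> /TsetP Hr /TsetP Ht; apply/TsetP => i.
case/orP: (Hr i) => /eqP ->; first exact: Ht.
set j := (t^-1)%g i.
have tj : t j = i by rewrite /j permKV.
case/orP: (Ht j) => /eqP; rewrite tj => ->.
  by rewrite permK eqxx orbT.
by rewrite permKV eqxx.
Qed.

Lemma Eset_refl s : s \in Eset s.
Proof. by rewrite inE Tset_refl. Qed.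

Lemma Eset_sym s t : (t \in Eset s) = (s \in Eset t).
Proof. by rewrite !inE andbC. Qed.

Lemma Eset_trans r t s : r \in Eset t -> t \in Eset s -> r \in Eset s.
Proof.
rewrite [r \in Eset t]inE [t \in Eset s]inE => /andP[h1 h2] /andP[h3 h4].
by rewrite inE (Tset_trans h1 h3) (Tset_trans h4 h2).
Qed.

Lemma Eset_sub s : Eset s \subset Tset s.
Proof. by apply/subsetP => t; rewrite inE => /andP[]. Qed.

Lemma Q_stable s t x : t \in Eset s -> (t (s x) == s (s x)) = (t x == s x).
Proof.
rewrite inE => /andP[/TsetP Ht /TsetP Hs].
apply/idP/idP => [h1|h2].
- apply/negPn/negP => h2.
  have tx : t x = (s^-1)%g x by move: (Ht x); rewrite (negPf h2) /= => /eqP.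
  set j := s x.
  have tj : t j = x.
    case/orP: (Hs x) => /eqP e; first by rewrite -e eqxx in h2.
    by rewrite /j e permKV.
  move: h1; rewrite tj => /eqP e.
  by move: h2; rewrite tx {1}e permK /j eqxx.
- apply/negPn/negP => h1.
  set j := s x.
  have tj : t j = x.
    by move: (Ht j); rewrite (negPf h1) /= /j permK => /eqP.
  have txj : t x = j by move/eqP: h2.
  case/orP: (Hs j) => /eqP e.
    by move: h1; rewrite -e eqxx.
  have tiv : (t^-1)%g j = x by rewrite -txj permK.
  by move: h1; rewrite e tiv tj eqxx.
Qed.

Lemma Q_stableX s t x k : t \in Eset s -> t x != s x -> t ((s ^+ k)%g x) != s ((s ^+ k)%g x).
Proof.
move=> tE hx; elim: k => [|k IH]; first by rewrite expg0 perm1.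
by rewrite expgSr permM Q_stable.
Qed.

End Comb.
Section Comb2.
Variable T : finType.
Implicit Types (s t r : {perm T}) (x y : T).

Lemma porbit_s s x y : (s y \in porbit s x) = (y \in porbit s x).
Proof.
have e : porbit s (s y) = porbit s y by have := porbit_perm s 1 y; rewrite expg1.
by rewrite porbit_sym e porbit_sym.
Qed.

Lemma porbit_sV s x y : ((s^-1)%g y \in porbit s x) = (y \in porbit s x).
Proof. by rewrite -porbit_s permKV. Qed.

Lemma restr_porbitE s x y :
  restr_perm (porbit s x) s y = if y \in porbit s x then s y else y.
Proof.
have nS : (s \in 'N(porbit s x | 'P))%g by apply/astabsP => z; rewrite /= porbit_s.
case: ifP => hy; first by rewrite restr_permE.
by rewrite (out_perm (restr_perm_on _ _)) ?hy.
Qed.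

Lemma restr_porbitVE s x y :
  ((restr_perm (porbit s x) s)^-1)%g y = if y \in porbit s x then (s^-1)%g y else y.
Proof.
case: ifP => hy.
  apply: (canLR (permK (restr_perm (porbit s x) s))).
  by rewrite restr_porbitE porbit_sV hy permKV.
by rewrite (out_perm (perm_onV (restr_perm_on _ _))) ?hy.
Qed.

Lemma prod_perm_eval (I : eqType) (r : seq I) (O : I -> {set T}) (f : I -> {perm T})
   (g : T -> T) :
  uniq r ->
  (forall o, o \in r -> forall x, f o x = if x \in O o then g x else x) ->
  (forall o, o \in r -> forall x, x \in O o -> g x \in O o) ->
  (forall o1 o2 x, o1 \in r -> o2 \in r -> x \in O o1 -> x \in O o2 -> o1 = o2) ->
  forall x, (\prod_(o <- r) f o)%g x = if has (fun o => x \in O o) r then g x else x.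
Proof.
elim: r => [|a r IH] /=; first by move=> *; rewrite big_nil perm1.
move=> /andP[anr ur] hf hg hd x.
have mb o : o \in r -> o \in a :: r by rewrite inE => ->; rewrite orbT.
have IH' := IH ur (fun o h => hf o (mb _ h)) (fun o h => hg o (mb _ h))
  (fun o1 o2 y h1 h2 => hd o1 o2 y (mb _ h1) (mb _ h2)).
rewrite big_cons permM hf ?mem_head //.
case: ifP => xa /=.
  have gxa := hg a (mem_head _ _) x xa.
  rewrite IH'; case: ifP => //= /hasP [o or gxo].
  by have ao := hd a o _ (mem_head _ _) (mb _ or) gxa gxo; rewrite ao or in anr.
by rewrite IH'.
Qed.

End Comb2.
Section CC.
Variable n : nat.
Implicit Types (s t : 'S_n) (x y : 'I_n).

Lemma porbit_s1 s y : porbit s (s y) = porbit s y.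
Proof. by have := porbit_perm s 1 y; rewrite expg1. Qed.

Lemma porbit_small s x : ~~ (1 < #|porbit s x|)%N -> s x = x.
Proof.
rewrite -leqNgt => /card_le1_eqP h.
by apply: h; rewrite ?porbit_s porbit_id.
Qed.

Lemma cycle_class_eval s (e : {ffun {set 'I_n} -> bool}) x :
  (\prod_(O in porbits s | (1 < #|O|)%N)
     (if e O then restr_perm O s else (restr_perm O s)^-1))%g x
  = if (1 < #|porbit s x|)%N then (if e (porbit s x) then s x else (s^-1)%g x) else x.
Proof.
rewrite -big_filter.
set r := filter _ _.
have memr o : (o \in r) = (o \in porbits s) && (1 < #|o|)%N.
  by rewrite mem_filter mem_index_enum andbT.
have inr o : o \in r -> exists y, o = porbit s y.
  by rewrite memr => /andP[/imsetP[y _ ->] _]; exists y.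
rewrite (@prod_perm_eval _ _ r id _
   (fun y => if e (porbit s y) then s y else (s^-1)%g y)).
- congr (if _ then _ else _); apply/hasP/idP => [[o ho xo]|big].
    have := ho; rewrite memr => /andP[_ co].
    case: (inr _ ho) => y oy; rewrite oy -eq_porbit_mem in xo.
    by rewrite (eqP xo) -oy.
  by exists (porbit s x); [rewrite memr big andbT imset_f | exact: porbit_id].
- by rewrite filter_uniq // index_enum_uniq.
- move=> o /inr [y ->] z /=.
  case: ifP => ez; rewrite ?restr_porbitE ?restr_porbitVE; case: ifP => // zo;
  by rewrite (eqP (etrans (eq_porbit_mem _ _ _) zo)) ez.
- move=> o /inr [y ->] z /= zo.
  by case: ifP => _; rewrite ?porbit_s ?porbit_sV.
- move=> o1 o2 z /inr [y1 ->] /inr [y2 ->] /=.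
  by rewrite -!eq_porbit_mem => /eqP <- /eqP <-.
Qed.

Lemma cycle_classE s t : (t \in cycle_class s) = (t \in Eset s).
Proof.
apply/idP/idP.
- case/imsetP => e _ ->; set u := (\prod_(_ in _ | _) _)%g.
  have ve y : u y = _ := cycle_class_eval s e y.
  rewrite inE; apply/andP; split; apply/TsetP => x.
    rewrite ve; case: ifP => big; first by case: ifP => _; rewrite eqxx ?orbT.
    by rewrite (porbit_small (negbT big)) eqxx.
  case big: (1 < #|porbit s x|)%N; last first.
    by rewrite ve big (porbit_small (negbT big)) eqxx.
  case ex: (e (porbit s x)); first by rewrite ve big ex eqxx.
  apply/orP; right; rewrite -{1}(permK u (s x)).
  by rewrite ve porbit_s1 big ex permK eqxx.
- move=> tE; have := tE; rewrite inE => /andP[/TsetP Ht _].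
  apply/imsetP; exists [ffun O : {set 'I_n} => [forall y in O, t y == s y]] => //.
  apply/permP => x; rewrite cycle_class_eval ffunE.
  case: ifP => big; last first.
    have sx := porbit_small (negbT big).
    have sVx : (s^-1)%g x = x by rewrite -{1}sx permK.
    by move: (Ht x); rewrite sx sVx orbb => /eqP.
  case: ifP => [/forall_inP h|/negbT/forall_inPn [y yo ty]].
    by apply/eqP; apply: h; apply: porbit_id.
  rewrite porbit_sym in yo; case/porbitP: yo => k ->.
  have := Q_stableX k tE ty.
  by move: (Ht ((s ^+ k)%g y)) => /orP [/eqP -> | /eqP -> ]; rewrite ?eqxx.
Qed.
End CC.
Local Open Scope ring_scope.
Section Alg.
Variable C : comNzRingType.
Variable n : nat.
Implicit Types (s t u r : 'S_n).

Lemma sum_closed (G : 'S_n -> C) (X : {set 'S_n}) :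
  (forall t r, t \in X -> r \in Eset t -> r \in X) ->
  (forall t, t \in X -> \sum_(r in Eset t) G r = 0) ->
  \sum_(r in X) G r = 0.
Proof.
move: {2}#|X|.+1 (ltnSn #|X|) => k; elim: k X => [//|k IH] X hk hcl hz.
case: (set_0Vmem X) => [->|[t tX]]; first by rewrite big_set0.
rewrite (big_setID (Eset t)) /=.
have sub : Eset t \subset X by apply/subsetP => r; apply: hcl.
rewrite (setIidPr sub) hz // add0r.
apply: IH.
- rewrite ltnS in hk; apply: leq_trans hk; apply: proper_card; apply/properP.
  by split; [exact: subsetDl | exists t => //; rewrite in_setD Eset_refl].
- move=> u r; rewrite !in_setD => /andP[ut uX] ru; rewrite (hcl u r uX ru) andbT.
  apply: contra ut => rt; apply: (Eset_trans _ rt); by rewrite Eset_sym.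
- by move=> u; rewrite in_setD => /andP[_ uX]; exact: hz.
Qed.

Lemma prod_Smat s t : \prod_i Smat C s i (t i) = ((t \in Tset s) : nat)%:R.
Proof.
case: (boolP (t \in Tset s)) => h.
  rewrite big1 // => i _; rewrite mxE; move/TsetP: h => /(_ i) h.
  by rewrite (eq_sym (s i)) (eq_sym _ (t i)) h.
rewrite inE negb_forall in h; case/existsP: h => i hi.
by rewrite (bigD1 i) //= mxE (eq_sym (s i)) (eq_sym _ (t i)) (negPf hi) mul0r.
Qed.

Lemma gimm_Smat (G : {group 'S_n}) chi s :
  gimm G chi (Smat C s) = \sum_(t in Tset s) ext0 G chi t.
Proof.
rewrite /gimm; under eq_bigr do rewrite prod_Smat.
rewrite [RHS]big_mkcond; apply: eq_bigr => t _.
by case: (t \in Tset s); rewrite ?mulr1 ?mulr0.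
Qed.

Lemma mono_inv (A : 'M[C]_n) s t : is_symmetric A -> t \in Eset s ->
  \prod_i A i (t i) = \prod_i A i (s i).
Proof.
move=> hA tE.
have sym i j : A i j = A j i by rewrite -{1}hA mxE.
have Ht : forall i, (t i == s i) || (t i == (s^-1)%g i).
  by apply/TsetP; move: tE; rewrite inE => /andP[].
rewrite (bigID (fun i => t i == s i)) [RHS](bigID (fun i => t i == s i)) /=.
congr (_ * _); first by apply: eq_bigr => i /eqP ->.
rewrite [in RHS](reindex_inj (@perm_inj _ (s^-1)%g)) /=; apply: eq_big => i.
  have := Q_stable ((s^-1)%g i) tE; rewrite !permKV => ->; done.
move=> hi; move: (Ht i); rewrite (negPf hi) /= => /eqP ->.
by rewrite permKV sym.
Qed.

End Alg.
Theorem mainTheorem6 (C : numClosedFieldType) (n : nat) (hn : (1 <= n)%N)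
  (H K : {group 'S_n}) (phi psi : 'S_n -> C) :
  [/\ ((forall A : 'M[C]_n, is_symmetric A -> gimm H phi A = gimm K psi A) <->
        (forall s : 'S_n, gimm H phi (Smat C s) = gimm K psi (Smat C s))),
      ((forall s : 'S_n, gimm H phi (Smat C s) = gimm K psi (Smat C s)) <->
        (forall s : 'S_n, \sum_(t in cycle_class s) ext0 H phi t =
                          \sum_(t in cycle_class s) ext0 K psi t)) &
      ((forall A : 'M[C]_n, is_symmetric A -> gimm H phi A = gimm K psi A) <->
        (forall s : 'S_n, \sum_(t in cycle_class s) ext0 H phi t =
                          \sum_(t in cycle_class s) ext0 K psi t))].
Proof.
set Dif := fun t => ext0 H phi t - ext0 K psi t.
set P1 := forall A : 'M[C]_n, _.
set P2 := forall s : 'S_n, gimm H phi _ = _.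
set P3 := forall s : 'S_n, \sum_(t in _) _ = _.
have P3E : P3 <-> (forall s, \sum_(t in Eset s) Dif t = 0).
  have ccE s : cycle_class s = Eset s by apply/setP => t; exact: cycle_classE.
  rewrite /P3; split => h s; move: (h s); rewrite ccE /Dif sumrB.
    by move=> ->; rewrite subrr.
  by move/eqP; rewrite subr_eq0 => /eqP.
have P12 : P1 -> P2.
  move=> h s; apply: h; apply/matrixP => i j; rewrite !mxE.
  have e1 : (s j == i) = ((s^-1)%g i == j).
    by apply/eqP/eqP => <-; rewrite ?permK ?permKV.
  have e2 : ((s^-1)%g j == i) = (s i == j).
    by apply/eqP/eqP => <-; rewrite ?permK ?permKV.
  by rewrite e1 e2 orbC.
have P23 : P2 -> (forall s, \sum_(t in Eset s) Dif t = 0).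
  move=> h.
  have HT s : \sum_(t in Tset s) Dif t = 0.
    by move: (h s); rewrite !gimm_Smat /Dif sumrB => ->; rewrite subrr.
  move=> s; move: {2}#|Tset s|.+1 (ltnSn #|Tset s|) => k.
  elim: k s => [//|k IH] s hk.
  have := HT s; rewrite (big_setID (Eset s)) (setIidPr (Eset_sub s)) /=.
  rewrite (@sum_closed C n _ (Tset s :\: Eset s)) ?addr0 //.
  - move=> u r; rewrite !in_setD => /andP[us uT] ru.
    have rT : r \in Tset u by move: ru; rewrite inE => /andP[].
    rewrite (Tset_trans rT uT) andbT; apply: contra us => rs.
    by apply: (Eset_trans _ rs); rewrite Eset_sym.
  - move=> u; rewrite in_setD => /andP[us uT]; apply: IH.
    rewrite ltnS in hk; apply: leq_trans hk; apply: proper_card; apply/properP.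
    split; first by apply/subsetP => r rT; exact: Tset_trans rT uT.
    exists s; first exact: Tset_refl.
    by apply: contra us => sT; rewrite inE uT sT.
have P31 : (forall s, \sum_(t in Eset s) Dif t = 0) -> P1.
  move=> h A hA; apply/eqP; rewrite -subr_eq0 /gimm -sumrB; apply/eqP.
  rewrite (eq_bigl (fun t => t \in [set: 'S_n])); last by move=> t; rewrite inE.
  apply: (@sum_closed C n); first by move=> *; rewrite inE.
  move=> t _.
  rewrite (eq_bigr (fun r => Dif r * \prod_i A i (t i))).
    by rewrite -mulr_suml h mul0r.
  by move=> r rE; rewrite (mono_inv hA rE) /Dif mulrBl.
split.
- by split; [exact: P12 | move=> h; apply: P31; exact: P23].
- by split; [move=> h; apply/P3E; exact: P23 | move=> /P3E h; apply: P12; exact: P31].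
- by split; [move=> h; apply/P3E; apply: P23; exact: P12 | move=> /P3E; exact: P31].
Qed.
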